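(* Assume $a/b>\sqrt2$, $|u|<u_{\max}$ and $a^2+(u^2-2)c^2\ne0$. Let $\mathcal{C}^\dagger$ be the unit circle centered at $f_1=(-c,0)$. Then the radical axis of $\mathcal{C}^\dagger$ and $\mathcal{C}$ is perpendicular to the radical axis of $\mathcal{C}^\dagger$ and $\mathcal{C}'$.
   Context: The elliptic billiard is $\mathcal{E}: x^2/a^2+y^2/b^2=1$, $a>b>0$, $c=\sqrt{a^2-b^2}$, with $a/b>\sqrt2$, and $u_{\max}:=\frac{a}{c^2}\sqrt{a^2-2b^2}$. For parameter $u$ of the self-intersected 4-periodic family, $\mathcal{C}$ is the circle with center $C=\left(0,\frac{c^2u^2-a^2+2b^2}{2b\sqrt{1-u^2}}\right)$ and radius $R=\frac{a^2-c^2u^2}{2b\sqrt{1-u^2}}$ (through the 4-periodic's vertices and the foci), and $\mathcal{C}'$ is the circle with center $C'=\left(0,-\frac{2bc^2\sqrt{1-u^2}}{a^2+(u^2-2)c^2}\right)$ and radius $\left|\frac{c(c^2u^2-a^2)}{a^2+(u^2-2)c^2}\right|$ (through the outer polygon's vertices and the foci). *)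

(* Defs.v *)
From Stdlib Require Import Reals.
Open Scope R_scope.

Definition pt := (R * R)%type.

Definition focal (a b : R) : R := sqrt (a^2 - b^2).

Definition umax (a b : R) : R :=
  let c := focal a b in a / c^2 * sqrt (a^2 - 2 * b^2).

(* Circle C : through the 4-periodic's vertices and the foci *)
Definition centerC (a b u : R) : pt :=
  let c := focal a b in
  (0, (c^2 * u^2 - a^2 + 2 * b^2) / (2 * b * sqrt (1 - u^2))).
Definition radiusC (a b u : R) : R :=
  let c := focal a b in (a^2 - c^2 * u^2) / (2 * b * sqrt (1 - u^2)).

(* Circle C' : through the outer polygon's vertices and the foci *)
Definition centerC' (a b u : R) : pt :=
  let c := focal a b in
  (0, - (2 * b * c^2 * sqrt (1 - u^2)) / (a^2 + (u^2 - 2) * c^2)).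
Definition radiusC' (a b u : R) : R :=
  let c := focal a b in Rabs (c * (c^2 * u^2 - a^2) / (a^2 + (u^2 - 2) * c^2)).

Definition power (P : pt) (r : R) (X : pt) : R :=
  (fst X - fst P)^2 + (snd X - snd P)^2 - r^2.

Definition radical_axis (P1 : pt) (r1 : R) (P2 : pt) (r2 : R) : pt -> Prop :=
  fun X => power P1 r1 X = power P2 r2 X.

Definition line (p d : pt) : pt -> Prop :=
  fun X => exists t : R, X = (fst p + t * fst d, snd p + t * snd d).

Definition perpendicular (L1 L2 : pt -> Prop) : Prop :=
  exists p1 d1 p2 d2 : pt,
    d1 <> (0, 0) /\ d2 <> (0, 0) /\
    (forall X, L1 X <-> line p1 d1 X) /\
    (forall X, L2 X <-> line p2 d2 X) /\
    fst d1 * fst d2 + snd d1 * snd d2 = 0.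

(* Main.v *)
Require Import Defs.
From Stdlib Require Import Reals Lra Psatz.
Open Scope R_scope.

Lemma rad_line (P1 P2 : pt) (r1 r2 : R) :
  fst P2 - fst P1 <> 0 ->
  forall X, radical_axis P1 r1 P2 r2 X <->
    line (- ((fst P1)^2 + (snd P1)^2 - r1^2 - (fst P2)^2 - (snd P2)^2 + r2^2)
            / (2 * (fst P2 - fst P1)), 0)
         (- (snd P2 - snd P1), fst P2 - fst P1) X.
Proof.
  destruct P1 as [p1 q1], P2 as [p2 q2]; simpl; intros Hn [x y].
  unfold radical_axis, line, power; simpl. split.
  - intros H. exists (y / (p2 - p1)). f_equal.
    + apply (Rmult_eq_reg_l (2 * (p2 - p1))); [|lra].
      field_simplify; auto. nra.
    + field; auto.
  - intros [t Ht]. injection Ht; intros -> ->. field; auto.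
Qed.

Theorem mainTheorem7 (a b u : R) :
  0 < b -> b < a -> a / b > sqrt 2 ->
  Rabs u < umax a b ->
  a^2 + (u^2 - 2) * (focal a b)^2 <> 0 ->
  let f1 : pt := (- focal a b, 0) in
  perpendicular
    (radical_axis f1 1 (centerC a b u) (radiusC a b u))
    (radical_axis f1 1 (centerC' a b u) (radiusC' a b u)).
Proof.
  intros Hb Hab Hr Hu HD f1.
  assert (Hs2 : sqrt 2 * b < a).
  { apply Rgt_lt in Hr. apply (Rmult_lt_compat_r b) in Hr; auto.
    unfold Rdiv in Hr. rewrite Rmult_assoc, Rinv_l in Hr by lra. lra. }
  assert (H2b : 2 * b^2 < a^2).
  { assert (sqrt 2 * sqrt 2 = 2) by (apply sqrt_sqrt; lra).
    assert (0 <= sqrt 2) by apply sqrt_pos. assert (0 <= sqrt 2 * b) by nra.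
    assert ((sqrt 2 * b) * (sqrt 2 * b) < a * a) by (apply Rmult_le_0_lt_compat; lra).
    nra. }
  set (c := focal a b) in *.
  assert (Hc2 : c^2 = a^2 - b^2).
  { unfold c, focal. rewrite <- Rsqr_pow2. apply Rsqr_sqrt. nra. }
  assert (Hc : 0 < c).
  { unfold c, focal. apply sqrt_lt_R0. nra. }
  assert (Hum : umax a b < 1).
  { unfold umax. fold c. set (s := sqrt (a^2 - 2*b^2)).
    assert (Hs : s * s = a^2 - 2*b^2) by (apply sqrt_sqrt; lra).
    assert (0 <= s) by apply sqrt_pos.
    assert ((a*s)*(a*s) < (c^2)*(c^2)) by (rewrite Hc2; replace ((a*s)*(a*s)) with (a*a*(s*s)) by ring; rewrite Hs; assert (0 < b^2*b^2) by (apply Rmult_lt_0_compat; nra); lra).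
    assert (a * s < c^2) by (destruct (Rlt_or_le (a*s) (c^2)); auto; nra).
    apply (Rmult_lt_reg_r (c^2)); [nra|]. field_simplify; nra. }
  assert (Hu1 : u^2 < 1).
  { assert (Rabs u < 1) by lra. assert (0 <= Rabs u) by apply Rabs_pos.
    rewrite <- (pow2_abs u). nra. }
  set (sq := sqrt (1 - u^2)).
  assert (Hsq : 0 < sq) by (apply sqrt_lt_R0; lra).
  assert (H1 : fst (centerC a b u) - fst f1 <> 0) by (simpl; lra).
  assert (H2 : fst (centerC' a b u) - fst f1 <> 0) by (simpl; lra).
  do 4 eexists. split; [|split; [|split; [|split]]].
  4: { intros X; apply (rad_line _ _ _ _ H2). }
  3: { intros X; apply (rad_line _ _ _ _ H1). }
  - intros E; injection E; intros; lra.
  - intros E; injection E; intros; lra.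
  - unfold centerC, centerC'; fold c; fold sq; unfold f1; cbv [fst snd].
    assert (HD' : c ^ 2 * u ^ 2 - a ^ 2 + 2 * b ^ 2 <> 0) by (intro; apply HD; nra).
    rewrite Rminus_0_r.
    replace (a ^ 2 + (u ^ 2 - 2) * c ^ 2) with (c ^ 2 * u ^ 2 - a ^ 2 + 2 * b ^ 2) by nra.
    field; repeat split; lra.
Qed.
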